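(* Let $G=(V,E,\ell,\Phi)$ be a weak model that is strongly connected and trackable. Then $n_G(t)=O(1)$, i.e. there is a constant $C$ such that $n_G(t)\le C$ for all $t\ge 1$.
   Context: A (single-colored) weak model $G=(V,E,\ell,\Phi)$ consists of a finite set of nodes $V$, a set of directed edges $E\subseteq V\times V$, a finite set of colors $\Phi$, and a coloring $\ell:V\to\Phi$. A walk of length $t$ is a sequence $(x_1,\dots,x_t)$ of nodes with $(x_i,x_{i+1})\in E$ for all $1\le i<t$. For a color sequence $Y_{[t]}=(Y_1,\dots,Y_t)\in\Phi^t$, a hypothesis is a walk $(x_1,\dots,x_t)$ with $\ell(x_i)=Y_i$ for all $i$; $\mathcal H_G(Y_{[t]})$ denotes the set of hypotheses. Define $n_G(t)=\max_{Y_{[t]}\in\Phi^t}|\mathcal H_G(Y_{[t]})|$. The model is trackable if $n_G(t)=O(t^k)$ for some $k\ge 0$. It is strongly connected if for every ordered pair of nodes $u,w$ there is a directed path from $u$ to $w$. *)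

(* Defs.v *)
From mathcomp Require Import all_boot.
Set Implicit Arguments. Unset Strict Implicit. Unset Printing Implicit Defensive.

Definition is_walk (V : finType) (E : rel V) (t : nat) (x : t.-tuple V) : bool :=
  [forall i : 'I_t, forall j : 'I_t, (j == i.+1 :> nat) ==> E (tnth x i) (tnth x j)].

Definition hypotheses (V Phi : finType) (E : rel V) (ell : V -> Phi)
  (t : nat) (Y : t.-tuple Phi) : {set t.-tuple V} :=
  [set x : t.-tuple V | is_walk E x && [forall i : 'I_t, ell (tnth x i) == tnth Y i]].

Definition nG (V Phi : finType) (E : rel V) (ell : V -> Phi) (t : nat) : nat :=
  \max_(Y : t.-tuple Phi) #|hypotheses E ell Y|.

Definition trackable (V Phi : finType) (E : rel V) (ell : V -> Phi) : Prop :=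
  exists k C N : nat, forall t, N <= t -> nG E ell t <= C * t ^ k.

Definition strongly_connected (V : finType) (E : rel V) : Prop :=
  forall u w : V, connect E u w.

(* Main.v *)
Require Import Defs.
From mathcomp Require Import all_boot zify.
From Stdlib Require Import Classical.

Section S.
Variables (V Phi : finType) (E : rel V) (ell : V -> Phi).

Definition walkseq (s : seq V) := if s is h :: tl then path E h tl else true.

Lemma is_walkE t (x : t.-tuple V) : is_walk E x = walkseq x.
Proof.
have Hs := size_tuple x.
rewrite /is_walk.
case Hx: (val x) => [|h tl] /=.
  by apply/forallP => i; exfalso; case: i; rewrite -Hs Hx.
rewrite Hx /= in Hs.
apply/forallP/(pathP h).
  move=> H i Hi.
  have Hi0 : i < t by rewrite -Hs /=; lia.
  have Hi1 : i.+1 < t by rewrite -Hs /=; lia.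
  move/forallP: (H (Ordinal Hi0)) => /(_ (Ordinal Hi1)) /implyP /(_ (eqxx _)).
  by rewrite !(tnth_nth h) Hx /=.
move=> H i; apply/forallP => j; apply/implyP => /eqP Hj.
rewrite !(tnth_nth h) Hx /= Hj /=.
have Hj' := ltn_ord j.
have Hi : i < size tl by move: Hj'; rewrite Hj; lia.
by have := H i Hi.
Qed.

Lemma inH t (Y : t.-tuple Phi) (x : t.-tuple V) :
  (x \in hypotheses E ell Y) = walkseq x && (map_tuple ell x == Y).
Proof.
rewrite inE is_walkE; congr andb.
apply/forallP/eqP.
  by move=> H; apply: eq_from_tnth => i; rewrite tnth_map; apply/eqP.
by move=> <- i; rewrite tnth_map.
Qed.


Definition diamond := exists s1 s2 : seq V,
  [/\ s1 != s2, walkseq s1, walkseq s2, map ell s1 = map ell s2 &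
      (ohead s1 = ohead s2 /\ ohead (rev s1) = ohead (rev s2))].

Lemma bounded : ~ diamond -> forall t (Y : t.-tuple Phi),
  #|hypotheses E ell Y| <= (#|V|.+1) * (#|V|.+1).
Proof.
move=> ND t Y.
pose f := fun x : t.-tuple V => (ohead (val x), ohead (rev (val x))).
rewrite -(card_in_imset (f := f)); last first.
  move=> x y; rewrite !inH => /andP [wx /eqP mx] /andP [wy /eqP my] [h1 h2].
  apply: val_inj; apply/eqP; apply/negPn/negP => neq; apply: ND.
  exists (val x), (val y); split => //.
  by have := congr1 val mx; have := congr1 val my => /= -> ->.
apply: (leq_trans (max_card _)).
by rewrite card_prod card_option.
Qed.

Lemma ohead_rev u (x : seq V) : ohead (rev (u :: x)) = Some (last u x).
Proof. by rewrite lastI rev_rcons. Qed.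

Lemma pump : diamond -> strongly_connected E ->
  exists L, 0 < L /\ forall k, 2 ^ k <= nG E ell (1 + k * L).
Proof.
move=> [s1 [s2 [neq w1 w2 m12 [h12 r12]]]] SC.
case: s1 neq w1 m12 h12 r12 => [|u x1]; case: s2 w2 => [|u' x2] //=.
  all: try by [].
move=> w2 neq w1 [eu m12] [eu'].
subst u'. rewrite !ohead_rev => -[ev].
have nx : x1 != x2 by move: neq; rewrite eqseq_cons eqxx.
set v := last u x1 in ev.
have /connectP [p pp up] := SC v u.
set D1 := x1 ++ p; set D2 := x2 ++ p.
have sx : size x1 = size x2 by rewrite -(size_map ell) m12 size_map.
have pD1 : path E u D1 by rewrite /D1 cat_path w1.
have pD2 : path E u D2 by rewrite /D2 cat_path w2 -ev.
have lD1 : last u D1 = u by rewrite /D1 last_cat.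
have lD2 : last u D2 = u by rewrite /D2 last_cat -ev.
have sD : size D2 = size D1 by rewrite /D1 /D2 !size_cat sx.
have mD : map ell D2 = map ell D1 by rewrite /D1 /D2 !map_cat m12.
have nD : D1 != D2 by rewrite /D1 /D2 eqseq_cat // eqxx andbT.
exists (size D1); split.
  rewrite lt0n size_eq0; apply/negP => /eqP e1; move: nD.
  by rewrite e1; move/eqP: sD; rewrite e1 size_eq0 => /eqP ->.
move=> k.
pose blk (b : bool) := if b then D1 else D2.
pose W (bs : seq bool) := flatten (map blk bs).
have pW : forall bs, path E u (W bs).
  elim=> [|b bs IH] //=; rewrite cat_path.
  by case: b => /=; rewrite ?pD1 ?pD2 ?lD1 ?lD2.
have mW : forall bs, map ell (W bs) = flatten (nseq (size bs) (map ell D1)).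
  elim=> [|b bs IH] //=; rewrite map_cat IH.
  by case: b => //=; rewrite mD.
have sW : forall bs, size (W bs) = size bs * size D1.
  elim=> [|b bs IH] //=; rewrite size_cat IH mulSn.
  by case: b => //=; rewrite sD.
have iW : forall bs cs, size bs = size cs -> W bs = W cs -> bs = cs.
  elim=> [|b bs IH] [|c cs] //= [] scs /eqP.
  rewrite eqseq_cat; last by case: b; case: c; rewrite //= sD.
  case/andP => /eqP ebc /eqP ewc; rewrite (IH cs scs ewc); congr cons.
  by move: ebc nD; case: b; case: c => //= ->; rewrite eqxx.
set t := 1 + k * size D1.
have szW : forall b : k.-tuple bool, size (u :: W b) == t.
  by move=> b; rewrite /= sW size_tuple; apply/eqP; rewrite /t; lia.
pose F (b : k.-tuple bool) : t.-tuple V := insubd (nseq_tuple t u) (u :: W b).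
have vF : forall b, val (F b) = u :: W b.
  by move=> b; rewrite val_insubd szW.
have szY : size (ell u :: flatten (nseq k (map ell D1))) == t.
  by have := szW [tuple of nseq k true]; rewrite /= -(size_map ell) mW size_nseq.
pose Y : t.-tuple Phi := insubd (nseq_tuple t (ell u)) (ell u :: flatten (nseq k (map ell D1))).
have HF : forall b, F b \in hypotheses E ell Y.
  move=> b; rewrite inH vF /= pW /=; apply/eqP/val_inj.
  by rewrite /= vF /Y val_insubd szY /= mW size_tuple.
have injF : injective F.
  move=> b c eFbc; apply: val_inj; apply: iW; first by rewrite !size_tuple.
  by have := congr1 val eFbc; rewrite !vF => -[].
apply: (leq_trans _ (leq_bigmax Y)).
have -> : 2 ^ k = #|[set F b | b in [set: k.-tuple bool]]|.
  by rewrite card_imset // cardsT card_tuple card_bool.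
apply: subset_leq_card; apply/subsetP => _ /imsetP [b _ ->]; exact: HF.
Qed.

End S.
Lemma expmono a b K : a <= b -> a ^ K <= b ^ K.
Proof. by case: K => [//|K] H; rewrite leq_exp2r. Qed.

Lemma arith (Cc K L N : nat) : exists k, N <= k /\ Cc * (1 + k * L) ^ K < 2 ^ k.
Proof.
set n := N + 2 * K + (Cc + L * K) + 1.
set m := 2 * n.
exists (2 ^ m); split.
  apply: (leq_trans _ (ltnW (ltn_expl m (isT : 1 < 2)))); rewrite /m /n; lia.
have hn : n < 2 ^ n by exact: ltn_expl.
have hL : L < 2 ^ L by exact: ltn_expl.
have hm : 0 < 2 ^ m by rewrite expn_gt0.
have h1 : 1 + 2 ^ m * L <= 2 ^ (m + L).
  rewrite expnD; move: hm hL; set P := 2 ^ m; set Q := 2 ^ L; nia.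
have h2 : (1 + 2 ^ m * L) ^ K <= 2 ^ ((m + L) * K).
  by rewrite expnM; apply: expmono.
have h3 : K * m + (Cc + L * K) < 2 ^ m.
  rewrite /m mul2n -addnn expnD. move: hn; rewrite /n.
  set P := 2 ^ _ ; nia.
have hX : 0 < (1 + 2 ^ m * L) ^ K by rewrite expn_gt0.
apply: (leq_trans (_ : _ <= 2 ^ Cc * (1 + 2 ^ m * L) ^ K)).
  by rewrite ltn_pmul2r // ltn_expl.
apply: (leq_trans (leq_mul (leqnn _) h2)).
rewrite -expnD leq_exp2l //; lia.
Qed.

Theorem theorem1 (V Phi : finType) (E : rel V) (ell : V -> Phi) :
  strongly_connected E -> trackable E ell ->
  exists C : nat, forall t, 1 <= t -> nG E ell t <= C.
Proof.
move=> SC [K [C [N HT]]].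
case: (classic (@diamond V Phi E ell)) => [D | ND].
  have [L [L0 HL]] := @pump _ _ _ _ D SC.
  have [k [Nk Hk]] := arith C K L N.
  exfalso.
  have h1 := HL k.
  have h2 : N <= 1 + k * L by apply: (leq_trans Nk); nia.
  have := leq_trans h1 (HT _ h2).
  by rewrite leqNgt Hk.
exists (#|V|.+1 * #|V|.+1) => t _.
rewrite /nG; apply/bigmax_leqP => Y _; exact: (@bounded _ _ E ell).
Qed.
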